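(* Let $(X,\Sigma,\mu)$ be a complete $\sigma$-finite measure space, $\mathcal{A}\subseteq\Sigma$ a sub-$\sigma$-finite algebra, $E=E^{\mathcal{A}}$ the associated conditional expectation, and $u\in\mathcal{D}(E)$ such that $T=EM_u$ is a bounded operator on $L^2(\Sigma)$. For $\lambda\in\mathbb{C}$ let $A_\lambda=\{x\in X: E(u)(x)=\lambda\}$. Then: (a) $\sigma_p(EM_u)\setminus\{0\}=\{\lambda\in\mathbb{C}\setminus\{0\}:\mu(A_\lambda)>0\}$. (b) $\{\lambda\in\mathbb{C}:\mu(A_\lambda)>0\}\subseteq\sigma_p(EM_u)$. (c) If $\mu(\{x\in X: E(u)(x)=0\})>0$, then $\{\lambda\in\mathbb{C}:\mu(A_\lambda)>0\}=\sigma_p(EM_u)$.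
   Context: For a sub-$\sigma$-finite algebra $\mathcal{A}\subseteq\Sigma$, $E=E^{\mathcal{A}}$ denotes the conditional expectation: for $f\geq 0$ measurable or $f\in L^2(\Sigma)$, $Ef$ is the unique $\mathcal{A}$-measurable function with $\int_A f\,d\mu=\int_A Ef\,d\mu$ for all $A\in\mathcal{A}$. $\mathcal{D}(E)=\{g\in L^0(\Sigma): E(|g|)\in L^0(\mathcal{A})\}$, where $L^0$ denotes a.e. finite measurable functions. $EM_u f=E(uf)$. $\sigma_p(T)$ is the point spectrum: the set of $\lambda\in\mathbb{C}$ for which there is a unit vector $x$ with $(T-\lambda)x=0$. *)

(* Defs.v *)
From HB Require Import structures.
From mathcomp Require Import all_boot all_order all_algebra.
From mathcomp Require Import all_classical all_reals all_analysis.
From mathcomp Require Import measurable_realfun lebesgue_measure lebesgue_integral.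
From mathcomp Require Import complex.
Set Implicit Arguments. Unset Strict Implicit. Unset Printing Implicit Defensive.
Import Order.TTheory GRing.Theory Num.Theory.
Local Open Scope classical_set_scope.
Local Open Scope ring_scope.

Section CondExpDefs.
Context d (X : measurableType d) (R : realType).
Variable mu : {measure set X -> \bar R}.

Definition sub_sigma_finite_algebra (calA : set (set X)) : Prop :=
  [/\ sigma_algebra setT calA, calA `<=` measurable &
      exists F : (set X)^nat,
        (forall n, calA (F n) /\ (mu (F n) < +oo)%E) /\ \bigcup_n F n = setT].

Definition Ameasurable_e (calA : set (set X)) (g : X -> \bar R) : Prop :=
  forall B : set (\bar R), measurable B -> calA (g @^-1` B).

(* g is (a version of) E^calA f for a nonnegative measurable f *)
Definition cexp_nonneg (calA : set (set X)) (f g : X -> \bar R) : Prop :=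
  [/\ forall x, (0 <= g x)%E, Ameasurable_e calA g &
      forall S, calA S -> (\int[mu]_(x in S) f x = \int[mu]_(x in S) g x)%E].

Definition csq (z : R[i]) : R := (complex.Re z) ^+ 2 + (complex.Im z) ^+ 2.
Definition cabs (z : R[i]) : R := Num.sqrt (csq z).

Definition cmeasurable (f : X -> R[i]) : Prop :=
  measurable_fun setT (fun x => complex.Re (f x)) /\
  measurable_fun setT (fun x => complex.Im (f x)).

Definition in_DE (calA : set (set X)) (f : X -> R[i]) : Prop :=
  cmeasurable f /\
  exists g, cexp_nonneg calA (fun x => (cabs (f x))%:E) g /\
            {ae mu, forall x, (g x < +oo)%E}.

Definition cexp (calA : set (set X)) (f g : X -> R[i]) : Prop :=
  exists g1 g2 g3 g4 : X -> \bar R,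
    [/\ cexp_nonneg calA (fun x => (Num.max (complex.Re (f x)) 0)%:E) g1,
        cexp_nonneg calA (fun x => (Num.max (- complex.Re (f x)) 0)%:E) g2,
        cexp_nonneg calA (fun x => (Num.max (complex.Im (f x)) 0)%:E) g3,
        cexp_nonneg calA (fun x => (Num.max (- complex.Im (f x)) 0)%:E) g4 &
        forall x, g x = complex.Complex (fine (g1 x) - fine (g2 x)) (fine (g3 x) - fine (g4 x))].

Definition norm2sq (f : X -> R[i]) : \bar R := (\int[mu]_x (csq (f x))%:E)%E.

Definition inL2 (f : X -> R[i]) : Prop := cmeasurable f /\ (norm2sq f < +oo)%E.

Definition EMu_bounded (calA : set (set X)) (u : X -> R[i]) : Prop :=
  exists C : R, forall f, inL2 f ->
    in_DE calA (fun x => u x * f x) /\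
    forall g, cexp calA (fun x => u x * f x) g ->
      inL2 g /\ (norm2sq g <= (C ^+ 2)%:E * norm2sq f)%E.

Definition point_spectrum (calA : set (set X)) (u : X -> R[i]) : set R[i] :=
  [set lam | exists f, [/\ inL2 f, norm2sq f = 1%E &
     exists g, cexp calA (fun x => u x * f x) g /\
               {ae mu, forall x, g x = lam * f x}]].

Definition level_set (Eu : X -> R[i]) (lam : R[i]) : set X := [set x | Eu x = lam].

End CondExpDefs.

(* Main.v *)
Require Import Defs.
From HB Require Import structures.
From mathcomp Require Import all_boot all_order all_algebra.
From mathcomp Require Import all_classical all_reals all_analysis.
From mathcomp Require Import measurable_realfun lebesgue_measure lebesgue_integral.
From mathcomp Require Import complex.
From mathcomp Require Import ring lra.
Import Order.TTheory GRing.Theory Num.Theory.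
Local Open Scope classical_set_scope.
Local Open Scope ring_scope.
Set Implicit Arguments. Unset Strict Implicit. Unset Printing Implicit Defensive.


Lemma cReM (R : realType) (x y : R[i]) : complex.Re (x * y) = complex.Re x * complex.Re y - complex.Im x * complex.Im y.
Proof. by case: x => a b; case: y => c e. Qed.
Lemma cImM (R : realType) (x y : R[i]) : complex.Im (x * y) = complex.Re x * complex.Im y + complex.Im x * complex.Re y.
Proof. by case: x => a b; case: y => c e. Qed.

Section Util.
Context d (X : measurableType d) (R : realType).
Variable (calA : set (set X)).
Hypothesis HA : sigma_algebra setT calA.
Hypothesis HAm : calA `<=` measurable.
Local Notation XA := (g_sigma_algebraType calA).

Lemma mA_calA (S : set XA) : measurable S -> calA S.
Proof. by rewrite measurable_g_measurableTypeE. Qed.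

Lemma calA_mA (S : set X) : calA S -> measurable (S : set XA).
Proof. by rewrite measurable_g_measurableTypeE. Qed.

Lemma Ameas_mfun (g : X -> \bar R) : Ameasurable_e calA g ->
  measurable_fun (setT : set XA) (g : XA -> \bar R).
Proof. move=> Hg _ B mB; rewrite setTI measurable_g_measurableTypeE //; exact: Hg. Qed.

Lemma mfunA_X d' (T : measurableType d') (f : XA -> T) :
  measurable_fun setT f -> measurable_fun (setT : set X) (f : X -> T).
Proof.
move=> mf _ B mB; rewrite setTI; apply: HAm.
by have := mf measurableT B mB; rewrite setTI measurable_g_measurableTypeE.
Qed.

Lemma mfun_Ameas (g : XA -> \bar R) : measurable_fun setT g ->
  Ameasurable_e calA (g : X -> \bar R).
Proof.
by move=> mg B mB; have := mg measurableT B mB; rewrite setTI measurable_g_measurableTypeE.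
Qed.

End Util.


Section GL.
Context d (X : measurableType d) (R : realType) (mu : {measure set X -> \bar R}).
Variable calA : set (set X).
Hypothesis HA : sigma_algebra setT calA.
Hypothesis HAm : calA `<=` measurable.

Lemma cexp_fine_int (p : X -> \bar R) (q : X -> \bar R) S :
  cexp_nonneg mu calA p q -> calA S ->
  (\int[mu]_(x in S) p x < +oo)%E ->
  mu.-integrable S (EFin \o (fine \o q)) /\
  (\int[mu]_(x in S) (fine (q x))%:E = \int[mu]_(x in S) p x)%E.
Proof.
move=> [q0 qA qint] AS pfin.
have mS := HAm AS.
have mq : measurable_fun setT q := mfunA_X HA HAm (Ameas_mfun HA qA).
have iq : mu.-integrable S q.
  apply/integrableP; split; first exact: measurable_funTS.
  under eq_integral do rewrite gee0_abs//.
  by rewrite -qint.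
have ae := integrable_ae mS iq.
have mfq : measurable_fun S (EFin \o (fine \o q)).
  apply: measurable_funTS; apply/measurable_EFinP.
  exact: measurableT_comp.
split.
  apply: (le_integrable mS mfq _ iq) => x _ /=.
  by case: (q x) => [r| |] //=; rewrite ?lexx ?normr0 ?leey.
rewrite qint //; apply: ae_eq_integral => //.
  exact: measurable_funTS.
by apply: filterS ae => x H Sx; rewrite /= fineK //; exact: H.
Qed.

Lemma GL (p : X -> R) q1 q2 S :
  measurable_fun setT p ->
  cexp_nonneg mu calA (fun x => (Num.max (p x) 0)%:E) q1 ->
  cexp_nonneg mu calA (fun x => (Num.max (- p x) 0)%:E) q2 ->
  calA S -> mu.-integrable S (EFin \o p) ->
  mu.-integrable S (EFin \o (fun x => fine (q1 x) - fine (q2 x))) /\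
  (\int[mu]_(x in S) p x = \int[mu]_(x in S) (fine (q1 x) - fine (q2 x)))%R.
Proof.
move=> mp c1 c2 AS ip.
have mS := HAm AS.
have e1 : (fun x => (Num.max (p x) 0)%:E) = (EFin \o p)^\+%E.
  by apply/funext => x; rewrite funeposE /= EFin_max.
have e2 : (fun x => (Num.max (- p x) 0)%:E) = (EFin \o p)^\-%E.
  by apply/funext => x; rewrite funenegE /= EFin_max EFinN.
have f1 : (\int[mu]_(x in S) (Num.max (p x) 0)%:E < +oo)%E.
  rewrite e1; have := integrable_pos_fin_num mS ip.
  by rewrite ge0_fin_numE // integral_ge0 // => x _; exact: funepos_ge0.
have f2 : (\int[mu]_(x in S) (Num.max (- p x) 0)%:E < +oo)%E.
  rewrite e2; have := integrable_neg_fin_num mS ip.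
  by rewrite ge0_fin_numE // integral_ge0 // => x _; exact: funeneg_ge0.
have [i1 q1e] := cexp_fine_int c1 AS f1.
have [i2 q2e] := cexp_fine_int c2 AS f2.
split.
  have := integrableB mS i1 i2.
  by apply: eq_integrable => // x _ /=; rewrite EFinB.
rewrite /Rintegral; congr fine.
under [RHS]eq_integral do rewrite EFinB.
rewrite integralB_EFin // q1e q2e e1 e2.
exact: integralE.
Qed.

End GL.


Section RInt.
Context d (X : measurableType d) (R : realType) (mu : {measure set X -> \bar R}).
Variable S : set X.
Hypothesis mS : measurable S.
Local Notation Int f := (mu.-integrable S (EFin \o f)).

Lemma iD (f g : X -> R) : Int f -> Int g -> Int (f \+ g).
Proof.
move=> hf hg; have := integrableD mS hf hg.
by apply: eq_integrable => // x _ /=; rewrite EFinD.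
Qed.

Lemma iB (f g : X -> R) : Int f -> Int g -> Int (f \- g).
Proof.
move=> hf hg; have := integrableB mS hf hg.
by apply: eq_integrable => // x _ /=; rewrite EFinB.
Qed.

Lemma iZ k (f : X -> R) : Int f -> Int (fun x => k * f x).
Proof.
move=> hf; have := integrableZl mS k hf.
by apply: eq_integrable => // x _ /=; rewrite EFinM.
Qed.

Lemma iDom (f g : X -> R) : measurable_fun setT f ->
  (forall x, S x -> `|f x| <= g x) -> Int g -> Int f.
Proof.
move=> mf fg ig; apply: (le_integrable mS _ _ ig).
  by apply/measurable_EFinP; exact: measurable_funTS.
move=> x Sx /=; rewrite lee_fin (le_trans (fg x Sx)) //.
exact: ler_norm.
Qed.

Lemma iBnd (f : X -> R) C : (mu S < +oo)%E -> measurable_fun setT f ->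
  (forall x, S x -> `|f x| <= C) -> Int f.
Proof.
move=> fS mf fC; apply: (iDom (g := cst C)) => //.
apply/integrableP; split; first by apply/measurable_EFinP; exact: measurable_cst.
rewrite (_ : (fun x => _) = cst `|C|%:E); last by apply/funext.
rewrite integral_cst //= lte_mul_pinfty //.
Qed.

End RInt.

Section Core.
Context d (X : measurableType d) (R : realType) (mu : {measure set X -> \bar R}).
Variable S : set X.
Hypothesis mS : measurable S.
Local Notation Int f := (mu.-integrable S (EFin \o f)).

Lemma iAbs (f : X -> R) : Int f -> Int (fun x => `|f x|).
Proof.
move=> hf; have := integrable_abse hf.
by apply: eq_integrable => // x _ /=.
Qed.

Lemma core (a b δ M K lr li : R) (ur ui er ei hr hi : X -> R) :
  (mu S < +oo)%E -> 0 <= δ ->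
  measurable_fun setT ur -> measurable_fun setT ui ->
  measurable_fun setT er -> measurable_fun setT ei ->
  measurable_fun setT hr -> measurable_fun setT hi ->
  (forall x, S x -> `|hr x - a| <= δ) -> (forall x, S x -> `|hi x - b| <= δ) ->
  (forall x, S x -> `|er x| <= M) -> (forall x, S x -> `|ei x| <= M) ->
  Int ur -> Int ui ->
  \int[mu]_(x in S) ur x = \int[mu]_(x in S) er x ->
  \int[mu]_(x in S) ui x = \int[mu]_(x in S) ei x ->
  \int[mu]_(x in S) (ur x * hr x - ui x * hi x) =
    \int[mu]_(x in S) (lr * hr x - li * hi x) ->
  \int[mu]_(x in S) (`|ur x| + `|ui x|) <= K ->
  Int (fun x => (er x - lr) * hr x - (ei x - li) * hi x) /\
  `|\int[mu]_(x in S) ((er x - lr) * hr x - (ei x - li) * hi x)|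
     <= δ * (M *+ 2 * fine (mu S) + K).
Proof.
move=> fS d0 mur mui mer mei mhr mhi hra hib erM eiM Iur Iui Eu Ei Eh HK.
have hrb : forall x, S x -> `|hr x| <= `|a| + δ.
  move=> x Sx; rewrite (_ : hr x = (hr x - a) + a); last by rewrite subrK.
  by rewrite (le_trans (ler_normD _ _)) // addrC lerD2l hra.
have hib' : forall x, S x -> `|hi x| <= `|b| + δ.
  move=> x Sx; rewrite (_ : hi x = (hi x - b) + b); last by rewrite subrK.
  by rewrite (le_trans (ler_normD _ _)) // addrC lerD2l hib.
have Ier : Int er := iBnd mS fS mer erM.
have Iei : Int ei := iBnd mS fS mei eiM.
have Ihr : Int hr := iBnd mS fS mhr hrb.
have Ihi : Int hi := iBnd mS fS mhi hib'.
have Iabs : Int (fun x => `|ur x| + `|ui x|) := iD mS (iAbs Iur) (iAbs Iui).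
have IQ1 : Int (fun x => a * ur x - b * ui x) := iB mS (iZ mS a Iur) (iZ mS b Iui).
have IP1 : Int (fun x => a * er x - b * ei x) := iB mS (iZ mS a Ier) (iZ mS b Iei).
have IP3 : Int (fun x => lr * hr x - li * hi x) := iB mS (iZ mS lr Ihr) (iZ mS li Ihi).
have mQ2 : measurable_fun setT (fun x => ur x * (hr x - a) - ui x * (hi x - b)).
  apply: measurable_funB; apply: measurable_funM => //;
    apply: measurable_funB => //; exact: measurable_cst.
have mP2 : measurable_fun setT (fun x => er x * (hr x - a) - ei x * (hi x - b)).
  apply: measurable_funB; apply: measurable_funM => //;
    apply: measurable_funB => //; exact: measurable_cst.
have Q2b : forall x, S x -> `|ur x * (hr x - a) - ui x * (hi x - b)| <= δ * (`|ur x| + `|ui x|).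
  move=> x Sx; rewrite (le_trans (ler_normB _ _)) // !normrM [X in _ <= X]mulrDr.
  by rewrite lerD // (mulrC δ) ler_wpM2l // ?hra ?hib.
have P2b : forall x, S x -> `|er x * (hr x - a) - ei x * (hi x - b)| <= (M * δ) *+ 2.
  move=> x Sx; rewrite (le_trans (ler_normB _ _)) // !normrM mulr2n.
  by rewrite lerD // ler_pM // ?hra ?hib ?erM ?eiM.
have IQ2 : Int (fun x => ur x * (hr x - a) - ui x * (hi x - b)).
  by apply: (iDom mS mQ2 Q2b); exact: iZ.
have IP2 : Int (fun x => er x * (hr x - a) - ei x * (hi x - b)) := iBnd mS fS mP2 P2b.
have Et : \int[mu]_(x in S) ((er x - lr) * hr x - (ei x - li) * hi x) =
    \int[mu]_(x in S) ((a * er x - b * ei x) + (er x * (hr x - a) - ei x * (hi x - b))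
       - (lr * hr x - li * hi x)).
  by apply: eq_Rintegral => x _; ring.
have Eh2 : \int[mu]_(x in S) (ur x * hr x - ui x * hi x) =
    \int[mu]_(x in S) ((a * ur x - b * ui x) + (ur x * (hr x - a) - ui x * (hi x - b))).
  by apply: eq_Rintegral => x _; ring.
split.
  apply: (eq_integrable mS _ _ _ (iB mS (iD mS IP1 IP2) IP3)) => x _ /=.
  by congr EFin; ring.
rewrite Et (RintegralB mS (iD mS IP1 IP2) IP3) (RintegralD mS IP1 IP2).
rewrite -Eh Eh2 (RintegralD mS IQ1 IQ2).
rewrite (RintegralB mS (iZ mS a Ier) (iZ mS b Iei)).
rewrite (RintegralB mS (iZ mS a Iur) (iZ mS b Iui)) !RintegralZl // Eu Ei.
rewrite (_ : forall p q r : R, p + q - (p + r) = q - r); last by move=> *; ring.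
rewrite (le_trans (ler_normB _ _)) // mulrDr lerD //.
- rewrite (le_trans (le_normr_Rintegral mS IP2)) //.
  rewrite (le_trans (le_Rintegral (f2 := cst ((M * δ) *+ 2)) mS _ _ _)) //.
  + exact: iAbs.
  + apply: (iBnd mS (C := `|(M * δ) *+ 2|) fS); first exact: measurable_cst.
    by move=> *.
  + by rewrite Rintegral_cst // (_ : M * δ *+ 2 * fine (mu S) = δ * (M *+ 2 * fine (mu S))) //; ring.
- rewrite (le_trans (le_normr_Rintegral mS IQ2)) //.
  rewrite (le_trans (le_Rintegral (f2 := fun x => δ * (`|ur x| + `|ui x|)) mS _ _ _)) //.
  + exact: iAbs.
  + exact: iZ.
  + by rewrite RintegralZl // ler_wpM2l.
Qed.

End Core.


Lemma fineMr (R : realType) (r : R) (y : \bar R) : fine (r%:E * y)%E = r * fine y.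
Proof.
case: y => [s||] //=.
  by rewrite mulry; case: sgrP => _; rewrite ?mul0e ?mul1e ?mulN1e /= ?mulr0.
by rewrite mulrNy; case: sgrP => _; rewrite ?mul0e ?mul1e ?mulN1e /= ?mulr0.
Qed.

Lemma maxMl (R : realType) (k p : R) : 0 <= k -> Num.max (k * p) 0 = k * Num.max p 0.
Proof.
by move=> k0; rewrite maxr_pMr // mulr0.
Qed.

Section Scale.
Context d (X : measurableType d) (R : realType) (mu : {measure set X -> \bar R}).
Variable calA : set (set X).
Hypothesis HA : sigma_algebra setT calA.
Hypothesis HAm : calA `<=` measurable.

Lemma IndInt (S B : set X) (k : R) (h : X -> \bar R) : measurable S -> measurable B ->
  0 <= k -> measurable_fun setT h -> (forall x, 0 <= h x)%E ->
  (\int[mu]_(x in S) ((k * \1_B x)%:E * h x) = k%:E * \int[mu]_(x in S `&` B) h x)%E.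
Proof.
move=> mS mB k0 mh h0.
under eq_integral do rewrite EFinM -muleA.
have mIh : measurable_fun S (fun x => (\1_B x)%:E * h x)%E.
  apply: measurable_funTS; apply: emeasurable_funM => //.
  by apply/measurable_EFinP; exact: measurable_indic.
rewrite (ge0_integralZl mu mS mIh); last 2 first.
- by move=> x _; rewrite mule_ge0 // lee_fin.
- by rewrite lee_fin.
congr (_ * _)%E; rewrite integral_mkcondr; apply: eq_integral => x _.
by rewrite /patch indicE; case: (x \in B) => /=; rewrite ?mul1e ?mul0e.
Qed.

Lemma cexp_scale (P : X -> R) q B (k : R) :
  cexp_nonneg mu calA (fun x => (P x)%:E) q -> calA B -> 0 <= k ->
  (forall x, 0 <= P x) -> measurable_fun setT P ->
  cexp_nonneg mu calA (fun x => (k * \1_B x * P x)%:E) (fun x => (k * \1_B x)%:E * q x)%E.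
Proof.
case=> q0 qA qi AB k0 P0 mP; split.
- by move=> x; apply: mule_ge0; rewrite ?lee_fin ?mulr_ge0 //.
- apply: (mfun_Ameas HA (g := fun x => (k * \1_B x)%:E * q x)%E).
  apply: emeasurable_funM; last exact: Ameas_mfun.
  apply/measurable_EFinP; apply: measurable_funM; first exact: measurable_cst.
  by apply: measurable_indic; exact: calA_mA.
- move=> S AS.
  have mqX : measurable_fun setT q := mfunA_X HA HAm (Ameas_mfun HA qA).
  have mSB : calA (S `&` B) by apply: (mA_calA HA); apply: measurableI; exact: calA_mA.
  under eq_integral do rewrite EFinM.
  rewrite !IndInt //; try exact: HAm.
  all: try by rewrite qi.
  all: try by move=> x; rewrite lee_fin.
  all: try by apply/measurable_EFinP.
Qed.

End Scale.


Lemma mset_bool d (T : measurableType d) (b : T -> bool) :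
  measurable_fun setT b -> measurable [set x | b x].
Proof.
move=> mb; have := mb measurableT [set true] I; rewrite setTI.
by congr measurable; apply/seteqP; split=> x /=.
Qed.

Section Pigeon.
Context d (X : measurableType d) (R : realType) (mu : {measure set X -> \bar R}).

Lemma pigeon (A : set X) (B : (set X)^nat) : measurable A ->
  (forall n, measurable (B n)) -> A `<=` \bigcup_n B n -> (0 < mu A)%E ->
  exists n, (0 < mu (A `&` B n))%E.
Proof.
move=> mA mB AB A0; apply: contrapT => /forallNP H.
have H0 : forall n, mu.-negligible (A `&` B n).
  move=> n; exists (A `&` B n); split => //; first exact: measurableI.
  by apply/eqP; move: (H n) => /negP; rewrite lt_neqAle measure_ge0 andbT negbK eq_sym.
have [C [mC C0 sC]] := negligible_bigcup H0.
have : (mu A <= mu C)%E.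
  apply: le_measure; rewrite ?inE //.
  by move=> x Ax; apply: sC; have [n _ Bnx] := AB x Ax; exists n.
by rewrite C0 => /(lt_le_trans A0); rewrite ltxx.
Qed.

End Pigeon.

Section PartB.
Context d (X : measurableType d) (R : realType) (mu : {measure set X -> \bar R}).
Variables (calA : set (set X)) (u Eu : X -> R[i]).

Lemma partb : sub_sigma_finite_algebra mu calA -> cmeasurable u -> cexp mu calA u Eu ->
  forall lam, (0 < mu (level_set Eu lam))%E -> point_spectrum mu calA u lam.
Proof.
move=> [HA HAm [F [HF cover]]] [mur mui] [e1 [e2 [e3 [e4 [c1 c2 c3 c4 Eeq]]]]] lam L0.
have [_ e1A _] := c1; have [_ e2A _] := c2; have [_ e3A _] := c3; have [_ e4A _] := c4.
pose ER := fun x => fine (e1 x) - fine (e2 x).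
pose EI := fun x => fine (e3 x) - fine (e4 x).
have mER : measurable_fun (setT : set (g_sigma_algebraType calA)) ER.
  by apply: measurable_funB; apply: measurableT_comp => //; exact: Ameas_mfun.
have mEI : measurable_fun (setT : set (g_sigma_algebraType calA)) EI.
  by apply: measurable_funB; apply: measurableT_comp => //; exact: Ameas_mfun.
have LE : level_set Eu lam = [set x | (ER x == complex.Re lam) && (EI x == complex.Im lam)].
  apply/seteqP; split=> x /=; rewrite /level_set /= Eeq.
    by move=> <- /=; rewrite !eqxx.
  by move=> /andP[/eqP h1 /eqP h2]; rewrite -/(ER x) -/(EI x) h1 h2; case: (lam).
have AL : calA (level_set Eu lam).
  rewrite LE; apply: (mA_calA HA); apply: mset_bool.
  by apply: measurable_and; apply: measurable_fun_eqr => //; exact: measurable_cst.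
have Acov : level_set Eu lam `<=` \bigcup_n F n by rewrite cover.
have [n Ln] := pigeon (HAm _ AL) (fun n => HAm _ (proj1 (HF n))) Acov L0.
set B := level_set Eu lam `&` F n.
have AB : calA B.
  by apply: (mA_calA HA); apply: measurableI; apply: (calA_mA HA) => //; exact: (proj1 (HF n)).
have mB : measurable B := HAm _ AB.
have Bfin : (mu B < +oo)%E.
  apply: le_lt_trans (proj2 (HF n)); apply: le_measure; rewrite ?inE //.
  all: try exact: (HAm _ (proj1 (HF n))).
  exact: subIsetr.
pose m := fine (mu B).
have m0 : 0 < m by apply: fine_gt0; apply/andP; split.
have muB : mu B = m%:E by rewrite fineK // ge0_fin_numE // measure_ge0.
pose c := (Num.sqrt m)^-1.
have c0 : 0 < c by rewrite invr_gt0 sqrtr_gt0.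
pose k := fun x => c * \1_B x.
have kge0 : forall x, 0 <= k x by move=> x; rewrite /k indicE mulr_ge0 ?ler0n // ltW.
have mk : measurable_fun setT k.
  by apply: measurable_funM; [exact: measurable_cst|exact: measurable_indic].
pose f := fun x => Complex (k x) 0 : R[i].
have N1 : norm2sq mu f = 1%E.
  rewrite /norm2sq /csq /=.
  transitivity (\int[mu]_x ((c ^+ 2 * \1_B x)%:E * (cst 1%E x)))%E.
    apply: eq_integral => x _; rewrite /= /k indicE mule1.
    by case: (x \in B); rewrite /= ?mulr1 ?mulr0 expr0n /= addr0 // expr1n mulr1.
  rewrite IndInt //; try exact: measurable_cst; try by rewrite sqr_ge0.
  rewrite setTI integral_cst // mul1e muB -EFinM /c exprVn sqr_sqrtr ?mulVf //.
  - by rewrite gt_eqF.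
  - exact: ltW.
have Hex : forall z w : R[i], complex.Re z = complex.Re w -> complex.Im z = complex.Im w -> z = w.
  by move=> [a1 b1] [a2 b2] /= -> ->.
pose g1 := fun x => ((k x)%:E * e1 x)%E.
pose g2 := fun x => ((k x)%:E * e2 x)%E.
pose g3 := fun x => ((k x)%:E * e3 x)%E.
pose g4 := fun x => ((k x)%:E * e4 x)%E.
have mPos : forall p : X -> R, measurable_fun setT p ->
    (forall x, 0 <= Num.max (p x) 0) /\ measurable_fun setT (fun x => Num.max (p x) 0).
  move=> p mp; split; first by move=> x; rewrite le_max lexx orbT.
  by apply: measurable_maxr => //; exact: measurable_cst.
exists f; split => //.
  split; last by rewrite N1 ltry.
  by split => //; exact: measurable_cst.
exists (fun x => Complex (fine (g1 x) - fine (g2 x)) (fine (g3 x) - fine (g4 x))); split.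
  exists g1, g2, g3, g4; split => //.
  - have -> : (fun x => (Num.max (complex.Re (u x * f x)) 0)%:E) =
        (fun x => (c * \1_B x * Num.max (complex.Re (u x)) 0)%:E).
      apply/funext => x; rewrite cReM /= -maxMl; last exact: (kge0 x).
      by congr (EFin (Num.max _ _)); rewrite /k; ring.
    have [P0 mP] := mPos _ mur.
    exact: (cexp_scale HA HAm c1 AB (ltW c0) P0 mP).
  - have -> : (fun x => (Num.max (- complex.Re (u x * f x)) 0)%:E) =
        (fun x => (c * \1_B x * Num.max (- complex.Re (u x)) 0)%:E).
      apply/funext => x; rewrite cReM /= -maxMl; last exact: (kge0 x).
      by congr (EFin (Num.max _ _)); rewrite /k; ring.
    have [P0 mP] := mPos _ (measurable_funN mur).
    exact: (cexp_scale HA HAm c2 AB (ltW c0) P0 mP).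
  - have -> : (fun x => (Num.max (complex.Im (u x * f x)) 0)%:E) =
        (fun x => (c * \1_B x * Num.max (complex.Im (u x)) 0)%:E).
      apply/funext => x; rewrite cImM /= -maxMl; last exact: (kge0 x).
      by congr (EFin (Num.max _ _)); rewrite /k; ring.
    have [P0 mP] := mPos _ mui.
    exact: (cexp_scale HA HAm c3 AB (ltW c0) P0 mP).
  - have -> : (fun x => (Num.max (- complex.Im (u x * f x)) 0)%:E) =
        (fun x => (c * \1_B x * Num.max (- complex.Im (u x)) 0)%:E).
      apply/funext => x; rewrite cImM /= -maxMl; last exact: (kge0 x).
      by congr (EFin (Num.max _ _)); rewrite /k; ring.
    have [P0 mP] := mPos _ (measurable_funN mui).
    exact: (cexp_scale HA HAm c4 AB (ltW c0) P0 mP).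
apply: aeW => x /=; rewrite /g1 /g2 /g3 /g4 !fineMr.
have [xB|xB] := boolP (x \in B).
  have [Lx _] : B x by rewrite inE in xB.
  move: Lx; rewrite /level_set /= Eeq => <-.
  by apply: Hex; rewrite ?cReM ?cImM /= /k indicE xB /=; ring.
by apply: Hex; rewrite ?cReM ?cImM /= /k indicE (negbTE xB) /=; ring.
Qed.

End PartB.


Section Helpers6.
Context d (X : measurableType d) (R : realType) (mu : {measure set X -> \bar R}).
Variable S : set X.
Hypothesis mS : measurable S.
Local Notation Int f := (mu.-integrable S (EFin \o f)).

Lemma ae_int (f g : X -> R) : measurable_fun setT f -> measurable_fun setT g ->
  {ae mu, forall x, f x = g x} -> Int g ->
  Int f /\ \int[mu]_(x in S) f x = \int[mu]_(x in S) g x.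
Proof.
move=> mf mg ae ig.
have mfS : measurable_fun S (EFin \o f) by apply/measurable_EFinP; exact: measurable_funTS.
have mgS : measurable_fun S (EFin \o g) by apply/measurable_EFinP; exact: measurable_funTS.
split.
  apply/integrableP; split => //.
  move/integrableP: ig => [_ ig]; rewrite (le_lt_trans _ ig) // le_eqVlt; apply/orP; left.
  apply/eqP; apply: ae_eq_integral => //.
  - exact: measurableT_comp.
  - exact: measurableT_comp.
  - by apply: filterS ae => x /= -> _.
rewrite /Rintegral; congr fine; apply: ae_eq_integral => //.
by apply: filterS ae => x /= -> _.
Qed.

Lemma small_meas (W : X -> R) c e : (mu S < +oo)%E -> 0 <= e -> e < c -> Int W ->
  `|\int[mu]_(x in S) W x| <= e * fine (mu S) ->
  ((forall x, S x -> c <= W x) \/ (forall x, S x -> W x <= - c)) -> mu S = 0%E.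
Proof.
move=> fS e0 ec IW hW hc.
have H : c * fine (mu S) <= `|\int[mu]_(x in S) W x|.
  case: hc => hc.
    have Ic : Int (cst c) by apply: (iBnd mS (C := `|c|) fS) => //; exact: measurable_cst.
    rewrite -Rintegral_cst // (le_trans _ (ler_norm _)) //.
    exact: le_Rintegral.
  have Ic : Int (cst (- c)) by apply: (iBnd mS (C := `|- c|) fS) => //; exact: measurable_cst.
  rewrite ler_normr; apply/orP; right.
  rewrite lerNr -mulNr -Rintegral_cst //.
  exact: le_Rintegral.
have f0 : 0 <= fine (mu S) by rewrite fine_ge0 // measure_ge0.
have f00 : fine (mu S) = 0.
  apply/eqP; rewrite eq_le f0 andbT.
  have : (c - e) * fine (mu S) <= 0 by rewrite mulrBl subr_le0 (le_trans H).
  by rewrite pmulr_rle0 // subr_gt0.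
by rewrite -[mu S]fineK ?f00 // ge0_fin_numE // measure_ge0.
Qed.

End Helpers6.


Lemma Hex (R : realType) (z w : R[i]) :
  complex.Re z = complex.Re w -> complex.Im z = complex.Im w -> z = w.
Proof. by case: z; case: w => a1 b1 a2 b2 /= -> ->. Qed.

Lemma abs_le_cabs (R : realType) (z : R[i]) :
  `|complex.Re z| <= cabs z /\ `|complex.Im z| <= cabs z.
Proof.
rewrite /cabs /csq; split; rewrite -sqrtr_sqr ler_wsqrtr //.
  by rewrite lerDl sqr_ge0.
by rewrite lerDr sqr_ge0.
Qed.

Lemma eps_lt (R : realType) (c Mr : R) : 0 < c -> 0 <= Mr -> Mr * (c / (4 * Mr + 1)) *+ 4 < c.
Proof.
move=> c0 M0; have A0 : 0 < 4 * Mr + 1 by lra.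
rewrite -mulr_natr (_ : Mr * (c / (4 * Mr + 1)) * 4%:R = (4 * Mr * c) / (4 * Mr + 1)).
  by rewrite ltr_pdivrMr //; nra.
by field; rewrite gt_eqF.
Qed.

Lemma cReB (R : realType) (z w : R[i]) : complex.Re (z - w) = complex.Re z - complex.Re w.
Proof. by case: z; case: w. Qed.
Lemma cImB (R : realType) (z w : R[i]) : complex.Im (z - w) = complex.Im z - complex.Im w.
Proof. by case: z; case: w. Qed.

Lemma pick_m (R : realType) (w : R) : w != 0 ->
  exists m : nat, ((m.+1%:R)^-1 <= w) \/ (w <= - (m.+1%:R)^-1).
Proof.
move=> w0; have aw : 0 < `|w| by rewrite normr_gt0.
exists (Num.truncn (`|w|^-1)).
have h := real_truncnS_gt (num_real (`|w|^-1)).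
set k := (Num.truncn _).+1%:R in h *.
have k0 : 0 < k by apply: lt_trans h; rewrite invr_gt0.
have hk : k^-1 < `|w|.
  by rewrite -[X in _ < X]invrK ltf_pV2 ?posrE ?invr_gt0.
have [w_ge0|w_lt0] := leP 0 w.
  by left; rewrite ltW // -(ger0_norm w_ge0).
by right; rewrite lerNr ltW // -(ltr0_norm w_lt0).
Qed.

Lemma pick_i (R : realType) (y M δ : R) : 0 < δ -> 0 <= y + M ->
  exists i : nat, - M + i%:R * δ <= y /\ y <= - M + i%:R * δ + δ.
Proof.
move=> d0 h; exists (Num.truncn ((y + M) / δ)).
have /andP[h1 h2] := truncn_itv (divr_ge0 h (ltW d0)).
rewrite ler_pdivlMr // in h1; rewrite ltr_pdivrMr // -natr1 mulrDl mul1r in h2.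
split; lra.
Qed.

Section PartA.
Context d (X : measurableType d) (R : realType) (mu : {measure set X -> \bar R}).
Variable calA : set (set X).
Hypothesis HA : sigma_algebra setT calA.
Hypothesis HAm : calA `<=` measurable.
Variable F : (set X)^nat.
Hypothesis HF : forall n, calA (F n) /\ (mu (F n) < +oo)%E.
Hypothesis cover : \bigcup_n F n = setT.
Variables u Eu : X -> R[i].
Hypothesis mur : measurable_fun setT (fun x => complex.Re (u x)).
Hypothesis mui : measurable_fun setT (fun x => complex.Im (u x)).
Variable kk : X -> \bar R.
Hypothesis kc : cexp_nonneg mu calA (fun x => (cabs (u x))%:E) kk.
Hypothesis kfin : {ae mu, forall x, (kk x < +oo)%E}.
Variables e1 e2 e3 e4 : X -> \bar R.
Hypothesis c1 : cexp_nonneg mu calA (fun x => (Num.max (complex.Re (u x)) 0)%:E) e1.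
Hypothesis c2 : cexp_nonneg mu calA (fun x => (Num.max (- complex.Re (u x)) 0)%:E) e2.
Hypothesis c3 : cexp_nonneg mu calA (fun x => (Num.max (complex.Im (u x)) 0)%:E) e3.
Hypothesis c4 : cexp_nonneg mu calA (fun x => (Num.max (- complex.Im (u x)) 0)%:E) e4.
Hypothesis Eeq : forall x, Eu x = Complex (fine (e1 x) - fine (e2 x)) (fine (e3 x) - fine (e4 x)).
Variable lam : R[i].
Hypothesis lam0 : lam != 0.
Variables (f : X -> R[i]) (g1 g2 g3 g4 : X -> \bar R).
Hypothesis mfr : measurable_fun setT (fun x => complex.Re (f x)).
Hypothesis mfi : measurable_fun setT (fun x => complex.Im (f x)).
Hypothesis d1 : cexp_nonneg mu calA (fun x => (Num.max (complex.Re (u x * f x)) 0)%:E) g1.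
Hypothesis d2 : cexp_nonneg mu calA (fun x => (Num.max (- complex.Re (u x * f x)) 0)%:E) g2.
Hypothesis d3 : cexp_nonneg mu calA (fun x => (Num.max (complex.Im (u x * f x)) 0)%:E) g3.
Hypothesis d4 : cexp_nonneg mu calA (fun x => (Num.max (- complex.Im (u x * f x)) 0)%:E) g4.
Hypothesis gae : {ae mu, forall x,
  Complex (fine (g1 x) - fine (g2 x)) (fine (g3 x) - fine (g4 x)) = lam * f x}.

Local Notation XA := (g_sigma_algebraType calA).
Let ER x := fine (e1 x) - fine (e2 x).
Let EI x := fine (e3 x) - fine (e4 x).
Let GR x := fine (g1 x) - fine (g2 x).
Let GI x := fine (g3 x) - fine (g4 x).
Let lr := complex.Re lam.
Let li := complex.Im lam.
Let lr' := complex.Re lam^-1.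
Let li' := complex.Im lam^-1.
Let hr x := lr' * GR x - li' * GI x.
Let hi x := lr' * GI x + li' * GR x.
Let ur x := complex.Re (u x).
Let ui x := complex.Im (u x).
Let WR x := (ER x - lr) * hr x - (EI x - li) * hi x.
Let WI x := (ER x - lr) * hi x + (EI x - li) * hr x.

Let mfA (q : X -> \bar R) : Ameasurable_e calA q -> measurable_fun (setT : set XA) (fun x => fine (q x)).
Proof. by move=> qA; apply: measurableT_comp => //; exact: Ameas_mfun. Qed.

Let Am (P : X -> \bar R) q : cexp_nonneg mu calA P q -> Ameasurable_e calA q.
Proof. by case. Qed.

Lemma mERA : measurable_fun (setT : set XA) ER.
Proof. by apply: measurable_funB; apply: mfA; apply: Am; [exact: c1|exact: c2]. Qed.
Lemma mEIA : measurable_fun (setT : set XA) EI.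
Proof. by apply: measurable_funB; apply: mfA; apply: Am; [exact: c3|exact: c4]. Qed.
Lemma mGRA : measurable_fun (setT : set XA) GR.
Proof. by apply: measurable_funB; apply: mfA; apply: Am; [exact: d1|exact: d2]. Qed.
Lemma mGIA : measurable_fun (setT : set XA) GI.
Proof. by apply: measurable_funB; apply: mfA; apply: Am; [exact: d3|exact: d4]. Qed.
Lemma mhrA : measurable_fun (setT : set XA) hr.
Proof. exact: measurable_funB (measurable_funM (measurable_cst lr') mGRA) (measurable_funM (measurable_cst li') mGIA). Qed.
Lemma mhiA : measurable_fun (setT : set XA) hi.
Proof. exact: measurable_funD (measurable_funM (measurable_cst lr') mGIA) (measurable_funM (measurable_cst li') mGRA). Qed.
Lemma mWRA : measurable_fun (setT : set XA) WR.
Proof. exact: measurable_funB (measurable_funM (measurable_funB mERA (measurable_cst lr)) mhrA) (measurable_funM (measurable_funB mEIA (measurable_cst li)) mhiA). Qed.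
Lemma mWIA : measurable_fun (setT : set XA) WI.
Proof. exact: measurable_funD (measurable_funM (measurable_funB mERA (measurable_cst lr)) mhiA) (measurable_funM (measurable_funB mEIA (measurable_cst li)) mhrA). Qed.

Let hC x : Complex (hr x) (hi x) = lam^-1 * Complex (GR x) (GI x).
Proof. by apply: Hex; rewrite ?cReM ?cImM /=. Qed.

Let GR_eq x : GR x = lr * hr x - li * hi x.
Proof.
have : lam * Complex (hr x) (hi x) = Complex (GR x) (GI x) by rewrite hC mulrA mulfV // mul1r.
by move/(congr1 (@complex.Re R)); rewrite cReM /=.
Qed.

Let GI_eq x : GI x = lr * hi x + li * hr x.
Proof.
have : lam * Complex (hr x) (hi x) = Complex (GR x) (GI x) by rewrite hC mulrA mulfV // mul1r.
by move/(congr1 (@complex.Im R)); rewrite cImM /=.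
Qed.

Let f_ae : {ae mu, forall x, f x = Complex (hr x) (hi x)}.
Proof.
apply: filterS gae => x H; rewrite hC -/(GR x) -/(GI x).
by rewrite [Complex _ _]H mulrA mulVf // mul1r.
Qed.

Local Notation Int S f := (mu.-integrable S (EFin \o f)).

Lemma core_both S (Mr δ a b : R) : calA S -> (mu S < +oo)%E -> 0 <= δ -> 0 <= Mr ->
  (forall x, S x -> [/\ (kk x <= Mr%:E)%E, `|ER x| <= Mr, `|EI x| <= Mr,
     `|hr x - a| <= δ & `|hi x - b| <= δ]) ->
  (Int S WR /\ `|\int[mu]_(x in S) WR x| <= δ * (Mr *+ 2 * fine (mu S) + Mr *+ 2 * fine (mu S))) /\
  (Int S WI /\ `|\int[mu]_(x in S) WI x| <= δ * (Mr *+ 2 * fine (mu S) + Mr *+ 2 * fine (mu S))).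
Proof.
move=> AS fS d0 M0 HS.
have mS : measurable S := HAm AS.
have mER := mfunA_X HA HAm mERA.
have mEI := mfunA_X HA HAm mEIA.
have mhr := mfunA_X HA HAm mhrA.
have mhi := mfunA_X HA HAm mhiA.
have mcab : measurable_fun setT (fun x => cabs (u x)).
  rewrite /cabs /csq; apply: measurableT_comp.
    exact: continuous_measurable_fun (@sqrt_continuous R).
  by apply: measurable_funD; apply: measurable_funX.
have [k0 kA kint] := kc.
have mkX : measurable_fun setT kk := mfunA_X HA HAm (Ameas_mfun HA kA).
have kS : (\int[mu]_(x in S) kk x <= (Mr * fine (mu S))%:E)%E.
  apply: (@le_trans _ _ (\int[mu]_(x in S) (cst Mr%:E) x)%E).
    apply: ge0_le_integral => //.
    all: try exact: measurable_funTS.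
    all: try by move=> x _; rewrite lee_fin.
    all: try by move=> x Sx; have [] := HS x Sx.
  rewrite integral_cst // EFinM fineK // ge0_fin_numE // measure_ge0.
have ecab : (\int[mu]_(x in S) (cabs (u x))%:E = \int[mu]_(x in S) kk x)%E by exact: kint.
have Icab : Int S (fun x => cabs (u x)).
  apply/integrableP; split.
    by apply/measurable_EFinP; exact: measurable_funTS.
  rewrite (eq_integral (fun x => (cabs (u x))%:E)); last first.
    by move=> x _; rewrite /= ?gee0_abs ?ger0_norm // ?lee_fin ?sqrtr_ge0.
  by rewrite ecab (le_lt_trans kS) // ltry.
have Rcab : \int[mu]_(x in S) cabs (u x) <= Mr * fine (mu S).
  rewrite -lee_fin /Rintegral fineK; last exact: integrable_fin_num.
  by rewrite ecab.
have Iur : Int S ur := iDom mS mur (fun x _ => (abs_le_cabs (u x)).1) Icab.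
have Iui : Int S ui := iDom mS mui (fun x _ => (abs_le_cabs (u x)).2) Icab.
have Kb : \int[mu]_(x in S) (`|ur x| + `|ui x|) <= Mr *+ 2 * fine (mu S).
  rewrite (le_trans (le_Rintegral (f2 := fun x => cabs (u x) + cabs (u x)) mS _ _ _)) //.
  - have H := iD mS (iAbs mS Iur) (iAbs mS Iui). exact: H.
  - have H := iD mS Icab Icab. exact: H.
  - by move=> x _; apply: lerD; [exact: (abs_le_cabs (u x)).1|exact: (abs_le_cabs (u x)).2].
  - by rewrite RintegralD // mulr2n mulrDl lerD.
have [_ Eur] := GL HA HAm mur c1 c2 AS Iur.
have [_ Eui] := GL HA HAm mui c3 c4 AS Iui.
pose B := `|a| + `|b| + δ *+ 2.
have hrB : forall x, S x -> `|hr x| <= B.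
  move=> x Sx; have [_ _ _ h1 _] := HS x Sx.
  rewrite (_ : hr x = (hr x - a) + a); last by rewrite subrK.
  rewrite (le_trans (ler_normD _ _)) // /B mulr2n.
  have := normr_ge0 b; lra.
have hiB : forall x, S x -> `|hi x| <= B.
  move=> x Sx; have [_ _ _ _ h1] := HS x Sx.
  rewrite (_ : hi x = (hi x - b) + b); last by rewrite subrK.
  rewrite (le_trans (ler_normD _ _)) // /B mulr2n.
  have := normr_ge0 a; lra.
have IB : Int S (fun x => B * (`|ur x| + `|ui x|)) := iZ mS B (iD mS (iAbs mS Iur) (iAbs mS Iui)).
have mRh : measurable_fun setT (fun x => ur x * hr x - ui x * hi x).
  exact: measurable_funB (measurable_funM mur mhr) (measurable_funM mui mhi).
have mIh : measurable_fun setT (fun x => ur x * hi x + ui x * hr x).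
  exact: measurable_funD (measurable_funM mur mhi) (measurable_funM mui mhr).
have bnd : forall x, S x -> forall p q : R, `|p| <= B -> `|q| <= B ->
    `|ur x * p| + `|ui x * q| <= B * (`|ur x| + `|ui x|).
  move=> x Sx p q hp hq; rewrite !normrM mulrDr lerD //.
    by rewrite mulrC ler_wpM2r.
  by rewrite mulrC ler_wpM2r.
have IRh : Int S (fun x => ur x * hr x - ui x * hi x).
  apply: (iDom mS mRh _ IB) => x Sx.
  by rewrite (le_trans (ler_normB _ _)) // bnd // ?hrB ?hiB.
have IIh : Int S (fun x => ur x * hi x + ui x * hr x).
  apply: (iDom mS mIh _ IB) => x Sx.
  by rewrite (le_trans (ler_normD _ _)) // bnd // ?hrB ?hiB.
have mRuf : measurable_fun setT (fun x => complex.Re (u x * f x)).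
  rewrite (_ : (fun x => _) = (fun x => ur x * complex.Re (f x) - ui x * complex.Im (f x))).
    exact: measurable_funB (measurable_funM mur mfr) (measurable_funM mui mfi).
  by apply/funext => x; rewrite cReM.
have mIuf : measurable_fun setT (fun x => complex.Im (u x * f x)).
  rewrite (_ : (fun x => _) = (fun x => ur x * complex.Im (f x) + ui x * complex.Re (f x))).
    exact: measurable_funD (measurable_funM mur mfi) (measurable_funM mui mfr).
  by apply/funext => x; rewrite cImM.
have aeR : {ae mu, forall x, complex.Re (u x * f x) = ur x * hr x - ui x * hi x}.
  by apply: filterS f_ae => x ->; rewrite cReM.
have aeI : {ae mu, forall x, complex.Im (u x * f x) = ur x * hi x + ui x * hr x}.
  by apply: filterS f_ae => x ->; rewrite cImM.
have [IRuf ERuf] := ae_int mS mRuf mRh aeR IRh.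
have [IIuf EIuf] := ae_int mS mIuf mIh aeI IIh.
have [_ EG1] := GL HA HAm mRuf d1 d2 AS IRuf.
have [_ EG3] := GL HA HAm mIuf d3 d4 AS IIuf.
have E3 : \int[mu]_(x in S) (ur x * hr x - ui x * hi x) =
          \int[mu]_(x in S) (lr * hr x - li * hi x).
  by rewrite -ERuf EG1; apply: eq_Rintegral => x _; exact: GR_eq.
have E4 : \int[mu]_(x in S) (ur x * hi x - ui x * - hr x) =
          \int[mu]_(x in S) (lr * hi x - li * - hr x).
  rewrite (_ : (fun x => ur x * hi x - ui x * - hr x) = (fun x => ur x * hi x + ui x * hr x)); last first.
    by apply/funext => x; ring.
  rewrite (_ : (fun x => lr * hi x - li * - hr x) = (fun x => lr * hi x + li * hr x)); last first.
    by apply/funext => x; ring.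
  by rewrite -EIuf EG3; apply: eq_Rintegral => x _; exact: GI_eq.
have erM : forall x, S x -> `|ER x| <= Mr by move=> x Sx; have [] := HS x Sx.
have eiM : forall x, S x -> `|EI x| <= Mr by move=> x Sx; have [] := HS x Sx.
have hra : forall x, S x -> `|hr x - a| <= δ by move=> x Sx; have [] := HS x Sx.
have hib : forall x, S x -> `|hi x - b| <= δ by move=> x Sx; have [] := HS x Sx.
have hra' : forall x, S x -> `|- hr x - - a| <= δ.
  by move=> x Sx; rewrite -opprD normrN; exact: hra.
split.
  exact: (core mS fS d0 mur mui mER mEI mhr mhi hra hib erM eiM Iur Iui Eur Eui E3 Kb).
have mhr' : measurable_fun setT (fun x => - hr x) := measurable_funN mhr.
have [I1 b1] := core mS fS d0 mur mui mER mEI mhi mhr' hib hra' erM eiM Iur Iui Eur Eui E4 Kb.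
have eW : (fun x => (ER x - lr) * hi x - (EI x - li) * - hr x) = WI.
  by apply/funext => x; rewrite /WI; ring.
by rewrite eW in I1 b1.
Qed.

Let cc (m : nat) : R := (m.+1%:R)^-1.
Let delta (M m : nat) : R := cc m / (4 * M%:R + 1).
Let aa (M m i : nat) : R := - M%:R + i%:R * delta M m.
Let Case (m s : nat) x : bool :=
  match s with 0 => cc m <= WR x | 1 => WR x <= - cc m | 2 => cc m <= WI x | _ => WI x <= - cc m end.
Let Pb (M m s i j : nat) x : bool := [&& (kk x <= M%:R%:E)%E, `|ER x| <= M%:R, `|EI x| <= M%:R,
  aa M m i <= hr x, hr x <= aa M m i + delta M m, aa M m j <= hi x, hi x <= aa M m j + delta M m &
  Case m s x].
Let P n M m s i j := F n `&` [set x | Pb M m s i j x].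

Lemma mPb M m s i j : measurable_fun (setT : set XA) (Pb M m s i j).
Proof.
have [_ kA _] := kc.
have mk := Ameas_mfun HA kA.
have mle := fun (p q : XA -> R) mp mq => @measurable_fun_ler _ XA R setT p q mp mq.
have mc := fun r : R => @measurable_cst _ _ XA R setT r.
have mn := fun (p : XA -> R) (mp : measurable_fun setT p) =>
  measurableT_comp (@normr_measurable R setT) mp.
repeat apply: measurable_and.
- exact: measurable_fun_lee mk (measurable_cst _).
- exact: mle (mn _ mERA) (mc _).
- exact: mle (mn _ mEIA) (mc _).
- exact: mle (mc _) mhrA.
- exact: mle mhrA (mc _).
- exact: mle (mc _) mhiA.
- exact: mle mhiA (mc _).
- rewrite /Case; case: s => [|[|[|s]]].
  + exact: mle (mc _) mWRA.
  + exact: mle mWRA (mc _).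
  + exact: mle (mc _) mWIA.
  + exact: mle mWIA (mc _).
Qed.

Lemma P_calA n M m s i j : calA (P n M m s i j).
Proof.
apply: (mA_calA HA); apply: measurableI.
  exact: (calA_mA HA (proj1 (HF n))).
exact: mset_bool (mPb M m s i j).
Qed.

Lemma P_zero n M m s i j : mu (P n M m s i j) = 0%E.
Proof.
set S := P n M m s i j.
have AS : calA S := P_calA n M m s i j.
have mS : measurable S := HAm AS.
have fS : (mu S < +oo)%E.
  apply: le_lt_trans (proj2 (HF n)); apply: le_measure; rewrite ?inE //.
  all: try exact: (HAm (proj1 (HF n))).
  exact: subIsetl.
have c0 : 0 < cc m by rewrite invr_gt0.
have M0 : 0 <= M%:R :> R by [].
have dpos : 0 < delta M m by rewrite divr_gt0 //; lra.
have HS : forall x, S x -> [/\ (kk x <= M%:R%:E)%E, `|ER x| <= M%:R, `|EI x| <= M%:R,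
     `|hr x - aa M m i| <= delta M m & `|hi x - aa M m j| <= delta M m].
  move=> x [_ /=] /andP[h1 /andP[h2 /andP[h3 /andP[h4 /andP[h5 /andP[h6 /andP[h7 _]]]]]]].
  by split => //; rewrite ler_norml; apply/andP; split; lra.
have [[IWR bWR] [IWI bWI]] := core_both AS fS (ltW dpos) M0 HS.
have eq4 : delta M m * (M%:R *+ 2 * fine (mu S) + M%:R *+ 2 * fine (mu S)) =
    M%:R * delta M m *+ 4 * fine (mu S) by ring.
rewrite eq4 in bWR bWI.
have ec := eps_lt c0 M0.
have e0 : 0 <= M%:R * delta M m *+ 4 by rewrite mulrn_wge0 // mulr_ge0 // ltW.
have Hc : forall x, S x -> Case m s x.
  by move=> x [_ /=] /andP[_ /andP[_ /andP[_ /andP[_ /andP[_ /andP[_ /andP[_ ->]]]]]]].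
clearbody S; case: s Hc => [|[|[|s]]] Hc.
- apply: (small_meas mS fS e0 ec IWR bWR); left; exact: Hc.
- apply: (small_meas mS fS e0 ec IWR bWR); right; exact: Hc.
- apply: (small_meas mS fS e0 ec IWI bWI); left; exact: Hc.
- apply: (small_meas mS fS e0 ec IWI bWI); right; exact: Hc.
Qed.

Lemma cover_pieces x : Complex (hr x) (hi x) != 0 -> Eu x != lam -> (kk x < +oo)%E ->
  exists n M m s i j, P n M m s i j x.
Proof.
move=> hx ex kx.
have [n _ Fx] : (\bigcup_n F n) x by rewrite cover.
have Wx : Complex (WR x) (WI x) = (Eu x - lam) * Complex (hr x) (hi x).
  apply: Hex; rewrite ?cReM ?cImM ?cReB ?cImB Eeq /= /WR /WI /ER /EI /lr /li; ring.
have W0 : Complex (WR x) (WI x) != 0 by rewrite Wx mulf_neq0 // subr_eq0.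
have [k0 _ _] := kc.
have kfx : kk x = (fine (kk x))%:E by rewrite fineK // ge0_fin_numE // k0.
have fk0 : 0 <= fine (kk x) by rewrite fine_ge0 // k0.
pose T := fine (kk x) + `|ER x| + `|EI x| + `|hr x| + `|hi x|.
pose M := (Num.truncn T).+1.
have TM : T < M%:R := real_truncnS_gt (num_real T).
have hM : [/\ fine (kk x) <= M%:R, `|ER x| <= M%:R, `|EI x| <= M%:R, `|hr x| <= M%:R & `|hi x| <= M%:R].
  have := normr_ge0 (ER x); have := normr_ge0 (EI x); have := normr_ge0 (hr x);
  have := normr_ge0 (hi x); rewrite /T in TM; split; lra.
have [hk hER hEI hhr hhi] := hM.
have Wor : (exists m, (cc m <= WR x) \/ (WR x <= - cc m)) \/
           (exists m, (cc m <= WI x) \/ (WI x <= - cc m)).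
  have [r0|r0] := eqVneq (WR x) 0.
    have [i0|i0] := eqVneq (WI x) 0.
      by move: W0; rewrite r0 i0 eqxx.
    by right; exact: pick_m.
  by left; exact: pick_m.
have pick : forall m, exists i j, aa M m i <= hr x /\ hr x <= aa M m i + delta M m /\
    aa M m j <= hi x /\ hi x <= aa M m j + delta M m.
  move=> m; have dpos : 0 < delta M m by rewrite divr_gt0 ?invr_gt0 //; lra.
  have [i [i1 i2]] : exists i : nat, - M%:R + i%:R * delta M m <= hr x /\ hr x <= - M%:R + i%:R * delta M m + delta M m.
    apply: pick_i => //; move: hhr; rewrite ler_norml; lra.
  have [j [j1 j2]] : exists j : nat, - M%:R + j%:R * delta M m <= hi x /\ hi x <= - M%:R + j%:R * delta M m + delta M m.
    apply: pick_i => //; move: hhi; rewrite ler_norml; lra.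
  by exists i, j.
have base : forall m i j s, aa M m i <= hr x -> hr x <= aa M m i + delta M m ->
    aa M m j <= hi x -> hi x <= aa M m j + delta M m -> Case m s x -> P n M m s i j x.
  move=> m i j s h1 h2 h3 h4 h5; split => //=.
  rewrite /Pb hER hEI h1 h2 h3 h4 h5 kfx lee_fin hk.
  by [].
case: Wor => [[m [h|h]]|[m [h|h]]]; have [i [j [h1 [h2 [h3 h4]]]]] := pick m.
- by exists n, M, m, 0%N, i, j; apply: base.
- by exists n, M, m, 1%N, i, j; apply: base.
- by exists n, M, m, 2%N, i, j; apply: base.
- by exists n, M, m, 3%N, i, j; apply: base.
Qed.

Lemma parta_false : mu (level_set Eu lam) = 0%E -> norm2sq mu f = 1%E -> False.
Proof.
move=> L0 N1.
have LE : level_set Eu lam = [set x | (ER x == complex.Re lam) && (EI x == complex.Im lam)].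
  apply/seteqP; split=> x /=; rewrite /level_set /= Eeq.
    by move=> <- /=; rewrite !eqxx.
  by move=> /andP[/eqP h1 /eqP h2]; rewrite -/(ER x) -/(EI x) h1 h2; case: (lam).
have mL : measurable (level_set Eu lam).
  apply: HAm; rewrite LE; apply: (mA_calA HA); apply: mset_bool.
  exact: measurable_and (measurable_fun_eqr mERA (measurable_cst _))
    (measurable_fun_eqr mEIA (measurable_cst _)).
have nL : mu.-negligible (level_set Eu lam) by exists (level_set Eu lam); split.
have nK : mu.-negligible (~` [set x | (kk x < +oo)%E]) := kfin.
have nP : mu.-negligible (\bigcup_n \bigcup_M \bigcup_m \bigcup_s \bigcup_i \bigcup_j
    P n M m s i j).
  have nPz : forall n M m s i j, mu.-negligible (P n M m s i j).
    move=> n M m s i j; exists (P n M m s i j); split => //.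
      exact: HAm (P_calA n M m s i j).
    exact: P_zero.
  do 6 (apply: negligible_bigcup => ?).
  exact: nPz.
have negZ : mu.-negligible [set x | Complex (hr x) (hi x) != 0].
  apply: negligibleS (negligibleU nL (negligibleU nK nP)) => x /= hx.
  have [e|e] := eqVneq (Eu x) lam; first by left.
  right; have [kx|kx] := boolP (kk x < +oo)%E; last by left.
  right; have [n [M [m [s [i [j Px]]]]]] := cover_pieces hx e kx.
  by exists n => //; exists M => //; exists m => //; exists s => //; exists i => //; exists j.
have aeh : {ae mu, forall x, Complex (hr x) (hi x) = 0}.
  by apply: negligibleS negZ => x /= /eqP.
have aef : {ae mu, forall x, [set: X] x -> (csq (f x))%:E = cst 0%E x}.
  apply: filterS2 f_ae aeh => x e1' e2' _.
  by rewrite e1' e2' /csq /= expr0n /= addr0.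
have : norm2sq mu f = 0%E.
  have mc : measurable_fun setT (fun x => (csq (f x))%:E).
    apply/measurable_EFinP; rewrite /csq.
    by apply: measurable_funD; apply: measurable_funX.
  rewrite /norm2sq (ae_eq_integral (cst 0%E) _ measurableT mc (measurable_cst _) aef).
  exact: integral0.
by rewrite N1 => /eqP; rewrite onee_eq0.
Qed.

End PartA.

Unset Implicit Arguments. Set Strict Implicit.

Theorem theorem3p1 (d : measure_display) (X : measurableType d) (R : realType)
  (mu : {measure set X -> \bar R}) (calA : set (set X)) (u Eu : X -> R[i]) :
  measure_is_complete mu ->
  sigma_finite setT mu ->
  sub_sigma_finite_algebra mu calA ->
  in_DE mu calA u ->
  EMu_bounded mu calA u ->
  cexp mu calA u Eu ->
  [/\ point_spectrum mu calA u `\ (0 : R[i]) =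
        [set lam : R[i] | lam != 0 /\ (0 < mu (level_set Eu lam))%E],
      [set lam : R[i] | (0 < mu (level_set Eu lam))%E] `<=` point_spectrum mu calA u &
      (0 < mu (level_set Eu (0%R : R[i])))%E ->
        [set lam : R[i] | (0 < mu (level_set Eu lam))%E] = point_spectrum mu calA u].
Proof.
move=> _ _ hsA hDE _ hEu.
have hb := partb hsA hDE.1 hEu.
have ha : forall lam, lam != 0 -> point_spectrum mu calA u lam ->
    (0 < mu (level_set Eu lam))%E.
  move=> lam l0 [f [[[mfr mfi] _] N1 [g [[g1 [g2 [g3 [g4 [d1 d2 d3 d4 Geq]]]]] gae]]]].
  have [HA HAm [F [HF cover]]] := hsA.
  have [[mur mui] [kk [kc kfin]]] := hDE.
  have [e1 [e2 [e3 [e4 [c1 c2 c3 c4 Eeq]]]]] := hEu.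
  rewrite lt0e measure_ge0 andbT; apply/negP => /eqP L0.
  have gae' : {ae mu, forall x,
      Complex (fine (g1 x) - fine (g2 x)) (fine (g3 x) - fine (g4 x)) = lam * f x}.
    by apply: filterS gae => x <-; rewrite Geq.
  exact: (parta_false HA HAm HF cover mur mui kc kfin c1 c2 c3 c4 Eeq l0
    mfr mfi d1 d2 d3 d4 gae' L0 N1).
split.
- apply/seteqP; split => lam /=.
    move=> [PS /eqP ne0]; split => //; exact: ha.
  by move=> [l0 Lp]; split; [exact: hb | exact/eqP].
- by move=> lam; exact: hb.
- move=> L00; apply/seteqP; split => lam; first exact: hb.
  have [->|l0] := eqVneq lam 0; first by move=> _.
  exact: ha.
Qed.
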